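(* Let $F$ be a finite field with $q$ elements and let $C\subseteq F^n$ be a balanced code with information length $d$. For a positive integer $n'$, let $C^{n'}=\{(\mathbf{c}_1,\dots,\mathbf{c}_{n'})\mid \mathbf{c}_i\in C\}\subseteq (F^n)^{n'}=F^{nn'}$. Then $C^{n'}$ is a balanced code of $F^{nn'}$ with information length $dn'$; in particular, if $0\le\delta\le 1-q^{-1}$, then $|(C^{n'})^{\le\delta}|\le q^{dn'h_q(\delta)}$, where $(C^{n'})^{\le\delta}$ is the set of codewords of $C^{n'}$ with relative weight at most $\delta$.
   Context: The relative weight of $\mathbf{a}\in F^N$ is $\mathrm{w}(\mathbf{a})/N$ where $\mathrm{w}$ is Hamming weight. For $I=\{1,\dots,N\}$ and a subset $I'=\{i_1<\dots<i_d\}$, the projection $F^I\to F^{I'}$ sends $(a_1,\dots,a_N)$ to $(a_{i_1},\dots,a_{i_d})$. A subset $C\subseteq F^N$ is a balanced code with information length $d$ if there exist subsets $I_1,\dots,I_s$ of $I$ (repetitions allowed), each of cardinality $d$, and an integer $t$ such that (i) every index $i\in I$ lies in exactly $t$ of the sets $I_j$; (ii) for each $j$, the projection $F^I\to F^{I_j}$ maps $C$ bijectively onto $F^{I_j}$. The $q$-ary entropy is $h_q(x)=x\log_q(q-1)-x\log_q x-(1-x)\log_q(1-x)$ with $0\log_q0=0$. *)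

(* Defs.v *)
From HB Require Import structures.
From mathcomp Require Import all_boot all_order all_algebra.
From mathcomp Require Import all_classical all_reals.
From mathcomp Require Import exp.
Set Implicit Arguments. Unset Strict Implicit. Unset Printing Implicit Defensive.
Import Order.TTheory GRing.Theory Num.Theory.
Local Open Scope ring_scope.

(* Words of length N over F are row vectors 'rV[F]_N; the index set I is 'I_N. *)

Definition hweight (F : fieldType) (N : nat) (a : 'rV[F]_N) : nat :=
  #|[set i : 'I_N | a 0 i != 0]|.

Definition relweight (R : realType) (F : fieldType) (N : nat) (a : 'rV[F]_N) : R :=
  (hweight a)%:R / N%:R.

(* projection F^I -> F^{I'}, I' = {i_1 < ... < i_d}:
   (a_1,...,a_N) |-> (a_{i_1},...,a_{i_d});  enum A lists A in increasing order. *)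
Definition proj (F : fieldType) (N : nat) (A : {set 'I_N}) (a : 'rV[F]_N)
  : 'rV[F]_#|A| := \row_(k < #|A|) a 0 (enum_val k).

Definition balanced (F : finFieldType) (N : nat) (C : {set 'rV[F]_N}) (d : nat)
  : Prop :=
  exists (s : nat) (Is : 'I_s -> {set 'I_N}) (t : nat),
    (0 < s)%N /\
    (forall j, #|Is j| = d) /\
    (forall i : 'I_N, #|[set j | i \in Is j]| = t) /\
    (forall j, {in C &, injective (@proj F N (Is j))}
               /\ [set @proj F N (Is j) c | c in C] = [set: 'rV[F]_#|Is j|]).

(* C^{n'} ⊆ (F^n)^{n'} = F^{n n'}, (c_1,...,c_{n'}) identified with the
   concatenation, realized as mxvec of the n' x n matrix with rows c_i. *)
Definition code_power (F : finFieldType) (n n' : nat) (C : {set 'rV[F]_n})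
  : {set 'rV[F]_(n' * n)} :=
  [set mxvec M | M in [set M : 'M[F]_(n', n) | [forall i, row i M \in C]]].

Definition xlogq (R : realType) (q : nat) (x : R) : R :=
  if x == 0 then 0 else x * ln x / ln q%:R.

Definition hq (R : realType) (q : nat) (x : R) : R :=
  x * ln (q%:R - 1) / ln q%:R - xlogq q x - xlogq q (1 - x).

Definition low_weight (R : realType) (F : finFieldType) (N : nat)
  (C : {set 'rV[F]_N}) (delta : R) : {set 'rV[F]_N} :=
  [set c in C | relweight R c <= delta].

(* Main.v *)
Require Import Defs.
From HB Require Import structures.
From mathcomp Require Import all_boot all_order all_algebra.
From mathcomp Require Import all_classical all_reals.
From mathcomp Require Import exp.
From mathcomp Require Import sequences lra.
Import Order.TTheory GRing.Theory Num.Theory.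
Local Open Scope ring_scope.
Section Helpers.
Set Implicit Arguments. Unset Strict Implicit.


Lemma proj_eqP (F : finFieldType) N (A : {set 'I_N}) (a b : 'rV[F]_N) :
  Defs.proj A a = Defs.proj A b <-> {in A, forall i, a 0 i = b 0 i}.
Proof.
split=> [H i iA|H].
  have := congr1 (fun v : 'rV_#|A| => v 0 (enum_rank_in iA i)) H.
  by rewrite /proj !mxE enum_rankK_in.
by apply/rowP=> k; rewrite !mxE; apply: H; exact: enum_valP.
Qed.

Lemma proj_surjP (F : finFieldType) N (A : {set 'I_N}) (C : {set 'rV[F]_N}) :
  [set Defs.proj A c | c in C] = [set: 'rV[F]_#|A|] <->
  forall g : 'I_N -> F, exists2 c, c \in C & {in A, forall i, c 0 i = g i}.
Proof.
split=> [H g|H].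
  have : (\row_k g (enum_val k) : 'rV_#|A|) \in [set Defs.proj A c | c in C].
    by rewrite H inE.
  case/imsetP=> c cC E; exists c => // i iA.
  have := congr1 (fun v : 'rV_#|A| => v 0 (enum_rank_in iA i)) E.
  by rewrite /proj !mxE enum_rankK_in.
apply/setP=> y; rewrite inE; apply/imsetP.
case: (pickP (mem A)) => [x0 x0A|A0].
  have [c cC Hc] := H (fun i => y 0 (enum_rank_in x0A i)).
  exists c => //; apply/rowP=> k; rewrite /proj mxE Hc ?enum_valP //.
  by rewrite enum_valK_in.
have [c cC _] := H (fun _ => 0).
exists c => //; apply/rowP=> k; exfalso.
by have := enum_valP k; rewrite -[_ \in A]/(mem A _ ) A0.
Qed.


Lemma sum_rV_prod (R : realType) (F : finFieldType) (k : nat) (f : F -> R) :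
  \sum_(y : 'rV[F]_k) \prod_(i < k) f (y 0 i) = \prod_(i < k) \sum_x f x.
Proof.
rewrite bigA_distr_bigA /=.
pose h (y : 'rV[F]_k) : {ffun 'I_k -> F} := [ffun i => y 0 i].
have hbij : {on [pred g | true], bijective h}.
  exists (fun g : {ffun 'I_k -> F} => \row_i g i) => [y _|g _].
    apply/rowP => i; rewrite mxE /h ffunE; reflexivity.
  apply/ffunP => i; rewrite /h ffunE mxE; reflexivity.
rewrite (reindex h hbij); apply: eq_bigr => y _.
apply: eq_bigr => i _; rewrite /h ffunE; reflexivity.
Qed.

Lemma sum_proj (R : realType) (F : finFieldType) N (A : {set 'I_N})
  (C : {set 'rV[F]_N}) (G : 'rV[F]_#|A| -> R) :
  {in C &, injective (Defs.proj A)} ->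
  [set Defs.proj A c | c in C] = [set: 'rV[F]_#|A|] ->
  \sum_(c in C) G (Defs.proj A c) = \sum_y G y.
Proof.
move=> inj surj; rewrite -(big_imset G inj) surj.
apply: eq_bigl => y; rewrite inE; reflexivity.
Qed.

Lemma double_count N s (Is : 'I_s -> {set 'I_N}) :
  (\sum_j #|Is j| = \sum_(i : 'I_N) #|[set j | i \in Is j]|)%N.
Proof.
have E1 j : #|Is j| = (\sum_(i : 'I_N) (i \in Is j))%N.
  by rewrite -sum1_card big_mkcond.
have E2 (i : 'I_N) : #|[set j | i \in Is j]| = (\sum_j (i \in Is j))%N.
  rewrite -sum1_card big_mkcond; apply: eq_bigr => j _; rewrite inE.
  by case: (i \in Is j).
rewrite (eq_bigr _ (fun j _ => E1 j)) (eq_bigr _ (fun i _ => E2 i)).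
exact: exchange_big.
Qed.


Lemma mxvec_index_inj m n : injective (uncurry (@mxvec_index m n)).
Proof. have [g gK _] := @curry_mxvec_bij m n; move=> x y E.
by rewrite -(gK x) ?inE // -(gK y) ?inE // E. Qed.

Lemma balanced_power (F : finFieldType) (n d n' : nat) (C : {set 'rV[F]_n}) :
  balanced C d -> balanced (code_power n' C) (d * n').
Proof.
case=> s [Is [t [s0 [cardI [covI projI]]]]].
pose J j : {set 'I_(n' * n)} :=
  (uncurry (@mxvec_index n' n)) @: finset.setX [set: 'I_n'] (Is j).
have inJ j r i : (mxvec_index r i \in J j) = (i \in Is j).
  apply/imsetP/idP => [[[r' i'] + E]|iI].
    have := @mxvec_index_inj n' n (r, i) (r', i') E => -[_ <-].
    by rewrite inE => /andP[].
  by exists (r, i); rewrite // inE inE iI.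
exists s, J, t; split=> //; split.
  move=> j; rewrite card_imset; last exact: mxvec_index_inj.
  by rewrite cardsX cardsT card_ord cardI mulnC.
split.
  move=> p; case/mxvec_indexP: p => r i.
  rewrite -(covI i); apply: eq_card => j; by rewrite !inE inJ.
move=> j; have [injj surjj] := projI j; split.
  move=> x y /imsetP[M + ->] /imsetP[M' + ->].
  rewrite !finset.in_set => /forallP HM /forallP HM' /proj_eqP E.
  suff -> : M = M' by [].
  apply/row_matrixP => r.
  apply: injj; [exact: HM|exact: HM'|]. apply/proj_eqP => i iI.
  rewrite [LHS]mxE [RHS]mxE -(mxvecE M) -(mxvecE M'). apply: E. rewrite inJ; exact: iI.
apply/proj_surjP => g.
have : forall r : 'I_n', exists2 c, c \in C &
    {in Is j, forall i, c 0 i = g (mxvec_index r i)}.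
  move=> r; have [c cC Hc] := (proj_surjP _ _).1 surjj (fun i => g (mxvec_index r i)).
  exists c; [exact: cC|exact: Hc].
move=> /fin_all_exists2 [f fC fg].
exists (mxvec (\matrix_(r, i) f r 0 i)).
  apply/imsetP; exists (\matrix_(r, i) f r 0 i); last reflexivity.
  rewrite finset.in_set; apply/forallP => r.
  have -> : row r (\matrix_(r, i) f r 0 i) = f r.
    apply/rowP => i; rewrite [LHS]mxE [LHS]mxE; reflexivity.
  exact: fC.
move=> p; case/mxvec_indexP: p => r i; rewrite inJ => iI.
rewrite mxvecE mxE; exact: fg.
Qed.


Lemma balanced_bound (R : realType) (F : finFieldType) N (C : {set 'rV[F]_N})
  d (delta : R) :
  balanced C d -> 0 <= delta -> delta <= 1 - (#|F|%:R)^-1 ->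
  (#|low_weight C delta|%:R : R) <= powR (#|F|%:R) (d%:R * hq #|F| delta).
Proof.
case=> s [Is [t [s0 [cardI [covI projI]]]]] d0 dle.
set q := #|F|.
have q1 : (1 < q)%N := card_finNzRing_gt1 F.
have qR : (1 : R) < q%:R by rewrite ltr1n.
have q0 : (0 : R) < q%:R by lra.
have q1R : (0 : R) < q%:R - 1 by lra.
have lnq : 0 < ln (q%:R : R) := ln_gt0 qR.
have qinv : q%:R * (q%:R : R)^-1 = 1 by rewrite mulfV // gt_eqF.
have dq : delta * q%:R <= q%:R - 1.
  have := ler_wpM2r (ltW q0) dle; rewrite mulrBl mul1r mulVf ?gt_eqF //; lra.
set a := 1 - delta. set b := delta / (q%:R - 1).
have a0 : 0 < a.
  rewrite /a; have : 0 < (q%:R : R)^-1 by rewrite invr_gt0. lra.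
have b0 : 0 <= b by rewrite /b divr_ge0 // ltW.
have ba : b <= a.
  rewrite /b ler_pdivrMr // /a; nra.
pose mu1 (x : F) := if x == 0 then a else b.
have mu1_ge0 x : 0 <= mu1 x by rewrite /mu1; case: ifP => _; lra.
have sum_mu1 : \sum_x mu1 x = 1.
  rewrite (bigD1 0) //= {1}/mu1 eqxx.
  rewrite (eq_bigr (fun _ => b)); last first.
    by move=> x /negbTE H; rewrite /mu1 H.
  have -> : \sum_(i : F | i != 0) b = b *+ #|predC1 (0 : F)|.
    exact: (sumr_const (predC1 (0 : F)) b).
  rewrite cardC1 -/q -mulr_natr.
  have -> : (q.-1)%:R = (q%:R : R) - 1.
    by rewrite -subn1 natrB // ltnW.
  rewrite /b divfK ?gt_eqF // /a; lra.
pose m (j : 'I_s) (c : 'rV[F]_N) := \prod_(i in Is j) mu1 (c 0 i).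
have m_ge0 j c : 0 <= m j c by apply: prodr_ge0 => i _.
have sumC_m j : \sum_(c in C) m j c = 1.
  have [inj surj] := projI j.
  have E (c : 'rV[F]_N) : m j c = (fun y : 'rV[F]_#|Is j| =>
      \prod_(k < #|Is j|) mu1 (y 0 k)) (Defs.proj (Is j) c).
    rewrite /m (big_enum_val (fun i => mu1 (c 0 i))) /=.
    apply: eq_bigr => k _; rewrite mxE; reflexivity.
  rewrite (eq_bigr _ (fun c _ => E c)).
  rewrite (sum_proj (fun y : 'rV[F]_#|Is j| => \prod_(k < #|Is j|) mu1 (y 0 k)) inj surj).
  rewrite sum_rV_prod.
  under eq_bigr do rewrite sum_mu1.
  exact: big1_eq.
have key (c : 'rV[F]_N) : (\prod_(i : 'I_N) mu1 (c 0 i)) ^+ t = \prod_j m j c.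
  rewrite -prodrXl.
  transitivity (\prod_(i : 'I_N) \prod_(j : 'I_s)
      (if i \in Is j then mu1 (c 0 i) else 1)).
    apply: eq_bigr => i _; rewrite -big_mkcond /= -(covI i) -prodr_const.
    by apply: eq_bigl => j; rewrite inE.
  rewrite exchange_big; apply: eq_bigr => j _; rewrite /m [RHS]big_mkcond.
  reflexivity.
have tN : (t * N = s * d)%N.
  have := double_count Is.
  rewrite (eq_bigr _ (fun j _ => cardI j)) (eq_bigr _ (fun i _ => covI i)).
  rewrite !sum_nat_const !card_ord => ->; exact: mulnC.
pose L0 := expR (- (N%:R * hq q delta * ln (q%:R : R))).
pose L := expR (- (d%:R * hq q delta * ln (q%:R : R))).
have lowb (c : 'rV[F]_N) : c \in low_weight C delta -> L0 <= \prod_i mu1 (c 0 i).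
  rewrite inE => /andP[cC rw].
  set w := hweight c.
  have wN : (w <= N)%N.
    by rewrite /w /hweight; apply: (leq_trans (max_card _)); rewrite card_ord.
  have wle : (w%:R : R) <= delta * N%:R.
    move: rw; rewrite /relweight -/w; case: (posnP N) => [N0|Npos].
      have -> : w = 0%N by move: wN; rewrite N0 leqn0 => /eqP.
      by rewrite N0 mulr0 => _; exact: lexx.
    by rewrite ler_pdivrMr ?ltr0n.
  have Ew : #|[pred i : 'I_N | c 0 i != 0]| = w.
    by rewrite /w /hweight; apply: eq_card => i; rewrite inE.
  have HC : addn #|[pred i : 'I_N | c 0 i == 0]| w = N.
    have HC' : addn #|[pred i : 'I_N | c 0 i == 0]| #|[pred i : 'I_N | c 0 i != 0]| = N.
      have := cardC [pred i : 'I_N | c 0 i == 0] => H.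
      exact: (etrans H (card_ord N)).
    by move: HC'; rewrite Ew.
  have prodE : \prod_i mu1 (c 0 i) = a ^+ (N - w) * b ^+ w.
    rewrite (bigID (fun i => c 0 i == 0)) /=.
    rewrite (eq_bigr (fun _ => a)); last by move=> i H; rewrite /mu1 H.
    rewrite [X in _ * X](eq_bigr (fun _ => b)); last first.
      by move=> i /negbTE H; rewrite /mu1 H.
    have -> : \prod_(i | c 0 i == 0) a = a ^+ #|[pred i : 'I_N | c 0 i == 0]|.
      exact: (prodr_const [pred i : 'I_N | c 0 i == 0] a).
    have -> : \prod_(i | c 0 i != 0) b = b ^+ #|[pred i : 'I_N | c 0 i != 0]|.
      exact: (prodr_const [pred i : 'I_N | c 0 i != 0] b).
    have Ez : #|[pred i : 'I_N | c 0 i == 0]| = (N - w)%N.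
      by apply/eqP; rewrite -(eqn_add2r w) subnK // HC.
    by rewrite Ew Ez.
  rewrite prodE.
  have [d00|dpos] := eqVneq delta 0.
    have w0 : w = 0%N.
      have : (w%:R : R) <= 0 by rewrite (le_trans wle) // d00 mul0r.
      by rewrite lern0 => /eqP.
    have h0 : hq q delta = 0.
      rewrite d00 /hq /xlogq eqxx !subr0 oner_eq0 ln1.
      by rewrite !(mul0r, mulr0, subr0, sub0r, oppr0).
    rewrite /L0 h0 w0 mulr0 mul0r oppr0 expR0 expr0 mulr1 subn0 /a d00 subr0.
    by rewrite expr1n.
  have dpos' : 0 < delta by rewrite lt_def dpos d0.
  have bpos : 0 < b by rewrite /b divr_gt0.
  have hE : hq q delta * ln (q%:R : R) =
      delta * ln (q%:R - 1) - delta * ln delta - a * ln a.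
    rewrite /hq /xlogq (negbTE dpos) -/a (gt_eqF a0).
    by rewrite !mulrBl !divfK ?gt_eqF.
  have lnb : ln b = ln delta - ln (q%:R - 1 : R).
    by rewrite /b lnM ?lnV // posrE ?invr_gt0.
  have lba : ln b <= ln a by rewrite ler_ln // posrE.
  have -> : a ^+ (N - w) * b ^+ w = expR ((N - w)%:R * ln a + w%:R * ln b).
    by rewrite expRD !expRM_natl !lnK // posrE.
  rewrite /L0 ler_expR natrB // -mulrA hE.
  have H : 0 <= (delta * N%:R - w%:R) * (ln a - ln b).
    by apply: mulr_ge0; rewrite subr_ge0.
  rewrite lnb in H *; move: H; rewrite /a; set LA := ln (1 - delta); set LD := ln delta; set LQ := ln (q%:R - 1); set NN := (N%:R : R); set W := (w%:R : R); nra.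
have L0' : 0 < L by rewrite /L expR_gt0.
have avg (c : 'rV[F]_N) : c \in low_weight C delta -> L <= (\sum_j m j c) / s%:R.
  move=> Hc.
  have avg0 : 0 <= (\sum_j m j c) / s%:R.
    by apply: divr_ge0; [apply: sumr_ge0 => j _|rewrite ler0n].
  rewrite -(ler_pXn2r s0) ?nnegrE; [|exact: ltW|exact: avg0].
  apply: le_trans (_ : \prod_j m j c <= _).
    rewrite -key.
    have LL : L ^+ s = L0 ^+ t.
      rewrite /L /L0 -!expRM_natl; apply: (congr1 expR).
      by rewrite !mulrN !mulrA -!natrM tN.
    rewrite LL; apply: lerXn2r; rewrite ?nnegrE.
    - by rewrite /L0 ltW // expR_gt0.
    - by apply: prodr_ge0 => i _.
    - exact: lowb.
  have H := @leif_AGM R 'I_s predT (fun j => m j c) (fun j _ => m_ge0 j c).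
  move: H => [H _]. move: H; rewrite card_ord; exact.
have SL : #|low_weight C delta|%:R * L <= 1.
  rewrite mulr_natl -sumr_const.
  apply: le_trans (_ : \sum_(c in low_weight C delta) (\sum_j m j c)/s%:R <= _).
    by apply: ler_sum => c /avg.
  apply: le_trans (_ : \sum_(c in C) (\sum_j m j c)/s%:R <= _).
    rewrite [X in X <= _]big_mkcond [X in _ <= X]big_mkcond.
    apply: ler_sum => c _ /=.
    case: ifP => cS; case: ifP => cC.
    - exact: lexx.
    - by move: cS; rewrite inE cC.
    - by apply: divr_ge0; [apply: sumr_ge0 => j _|rewrite ler0n].
    - exact: lexx.
  rewrite -mulr_suml exchange_big /=.
  under eq_bigr => j _ do rewrite sumC_m.
  rewrite sumr_const card_ord divff; first exact: lexx.
  by rewrite pnatr_eq0 -lt0n.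
have := SL; rewrite -ler_pdivlMr // => SL'.
apply: (le_trans SL').
rewrite /powR gt_eqF // /L expRN invrK mul1r; exact: lexx.
Qed.
End Helpers.

Theorem corollary3p5 (R : realType) (F : finFieldType) (n d n' : nat)
  (C : {set 'rV[F]_n}) :
  balanced C d -> (0 < n')%N ->
  balanced (code_power n' C) (d * n') /\
  (forall delta : R, 0 <= delta -> delta <= 1 - (#|F|%:R)^-1 ->
     (#|low_weight (code_power n' C) delta|%:R : R)
       <= powR (#|F|%:R) ((d * n')%:R * hq #|F| delta)).
Proof.
move=> Hb _.
have Hb' := balanced_power n' Hb.
split; first exact: Hb'.
move=> delta d0 dle; exact: balanced_bound Hb' d0 dle.
Qed.
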